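(* Let $F$ be a field of characteristic different from $2$, let $Q_1,Q_2,Q_3,Q_4$ be quaternion $F$-algebras with canonical involutions $\gamma_i$, and let $(D,\gamma)=(Q_1,\gamma_1)\otimes(Q_2,\gamma_2)$. Let $u\in D$ be invertible with $\gamma(u)=u$ and $\mathrm{Trd}_D(u)=0$, and suppose there is an isomorphism of algebras with involution $(Q_3,\gamma_3)\otimes(Q_4,\gamma_4)\simeq(D,\mathrm{Int}(u^{-1})\circ\gamma)$. Then the $16$-dimensional quadratic space $(D,q_u)$, where $q_u(x)=\mathrm{Trd}_D(xu\gamma(x))$, contains a totally isotropic subspace of dimension $5$.
   Context: The canonical involution of a quaternion algebra $Q$ is $\gamma_Q(x)=\mathrm{Trd}_Q(x)-x$. $\mathrm{Trd}_D$ is the reduced trace of $D$; $\mathrm{Int}(a)(x)=axa^{-1}$. *)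

(* Defs.v *)
(* Concrete model of quaternion algebras (a,b)_F and their
   tensor products, via coordinates in the standard bases. *)
From mathcomp Require Import all_boot all_order all_algebra.
Set Implicit Arguments. Unset Strict Implicit. Unset Printing Implicit Defensive.
Import GRing.Theory.
Local Open Scope ring_scope.

(* basis index of a quaternion algebra: (s,t) stands for i^s j^t,
   so (false,false)=1, (true,false)=i, (false,true)=j, (true,true)=k=ij *)
Notation qidx := (bool * bool)%type.
Notation tidx := (qidx * qidx)%type.
Notation quat F := {ffun qidx -> F^o}.
Notation tens F := {ffun tidx -> F^o}.

Section Quaternions.
Variable F : fieldType.
Local Notation quat := (quat F).
Local Notation tens := (tens F).


Definition qbasis (p : qidx) : quat := [ffun r => (r == p)%:R].
Definition qone : quat := qbasis (false, false).
Definition qxor (p q : qidx) : qidx := (addb p.1 q.1, addb p.2 q.2).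

(* structure constants of (a,b)_F : i^2 = a, j^2 = b, ji = -ij,
   (i^s1 j^t1)(i^s2 j^t2) = qcoef * i^(s1+s2) j^(t1+t2) *)
Definition qcoef (a b : F) (p q : qidx) : F :=
  (if p.2 && q.1 then -1 else 1) * (if p.1 && q.1 then a else 1)
  * (if p.2 && q.2 then b else 1).

Definition qmul (a b : F) (x y : quat) : quat :=
  \sum_(p : qidx) \sum_(q : qidx) (x p * y q * qcoef a b p q) *: qbasis (qxor p q).

Definition qTrd (x : quat) : F := 2%:R * x (false, false).

Definition qgamma (x : quat) : quat := qTrd x *: qone - x.

Definition tpure (x y : quat) : tens := [ffun pq => x pq.1 * y pq.2].
Definition tbasis (pq : tidx) : tens := tpure (qbasis pq.1) (qbasis pq.2).
Definition tone : tens := tpure qone qone.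

(* multiplication of (a1,b1)_F (x) (a2,b2)_F : bilinear extension of
   (x (x) y)(x' (x) y') = x x' (x) y y' *)
Definition tmul (a1 b1 a2 b2 : F) (z w : tens) : tens :=
  \sum_(p : tidx) \sum_(q : tidx)
     (z p * w q) *: tpure (qmul a1 b1 (qbasis p.1) (qbasis q.1))
                          (qmul a2 b2 (qbasis p.2) (qbasis q.2)).

Definition tmap (f g : quat -> quat) (z : tens) : tens :=
  \sum_(p : tidx) z p *: tpure (f (qbasis p.1)) (g (qbasis p.2)).

Definition tgamma : tens -> tens := tmap qgamma qgamma.

(* reduced trace of Q1 (x) Q2 : linear extension of
   Trd_D(x (x) y) = Trd_Q1(x) Trd_Q2(y) *)
Definition tTrd (z : tens) : F :=
  \sum_(p : tidx) z p * (qTrd (qbasis p.1) * qTrd (qbasis p.2)).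

Definition qform (a1 b1 a2 b2 : F) (u x : tens) : F :=
  tTrd (tmul a1 b1 a2 b2 (tmul a1 b1 a2 b2 x u) (tgamma x)).

Definition has_tot_isotropic_subspace (q : tens -> F) (n : nat) : Prop :=
  exists w : 'I_n -> tens,
    (forall c : 'I_n -> F, \sum_(i < n) c i *: w i = 0 -> forall i, c i = 0)
    /\ (forall c : 'I_n -> F, q (\sum_(i < n) c i *: w i) = 0).

End Quaternions.

(* Main.v *)
Require Import Defs.
From mathcomp Require Import all_boot all_order all_algebra.
From mathcomp Require Import ring.
Set Implicit Arguments. Unset Strict Implicit. Unset Printing Implicit Defensive.
Import GRing.Theory.
Local Open Scope ring_scope.

Section Alg.
Variable F : fieldType.

Definition txor (p q : tidx) : tidx := (qxor p.1 q.1, qxor p.2 q.2).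
Definition qs (p : qidx) : F := if p == (false,false) then 1 else -1.
Definition ts (p : tidx) : F := qs p.1 * qs p.2.
Definition t0 : tidx := ((false,false),(false,false)).

Lemma qxorK p r : qxor (qxor p r) r = p.
Proof. by case: p r => [[] []] [[] []]. Qed.
Lemma txorK p r : txor (txor p r) r = p.
Proof. by case: p r => [p1 p2] [r1 r2]; rewrite /txor /= !qxorK. Qed.
Lemma txor_inj r : injective (txor ^~ r).
Proof. by move=> x y /(congr1 (txor ^~ r)); rewrite /= !txorK. Qed.
Lemma txor0 p : txor p t0 = p.
Proof. by case: p => [[[] []] [[] []]]. Qed.
Lemma txorC p q : txor p q = txor q p.
Proof. by case: p q => [[[] []] [[] []]] [[[] []] [[] []]]. Qed.
Lemma txorA p q r : txor (txor p q) r = txor p (txor q r).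
Proof. by case: p q r => [[[] []] [[] []]] [[[] []] [[] []]] [[[] []] [[] []]]. Qed.
Lemma txorpp p : txor p p = t0.
Proof. by case: p => [[[] []] [[] []]]. Qed.

Lemma ffZ (aT : finType) (k : F) (f : {ffun aT -> F^o}) x : (k *: f) x = k * f x.
Proof. by rewrite ffunE. Qed.

Lemma qbasisE p r : qbasis F p r = (r == p)%:R.
Proof. by rewrite ffunE. Qed.

Lemma qmul_basis a b p q :
  qmul a b (qbasis F p) (qbasis F q) = qcoef a b p q *: qbasis F (qxor p q).
Proof.
rewrite /qmul (bigD1 p) //= [X in _ + X]big1 ?addr0 => [|p' np]; last first.
  by apply: big1 => q' _; rewrite qbasisE (negPf np) !mul0r scale0r.
rewrite (bigD1 q) //= [X in _ + X]big1 ?addr0 => [|q' nq]; last first.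
  by rewrite !qbasisE (negPf nq) mulr0 mul0r scale0r.
by rewrite !qbasisE !eqxx !mul1r.
Qed.

Lemma txor_eq p q r : (txor p q == r) = (q == txor p r).
Proof.
by case: p q r => [[[] []] [[] []]] [[[] []] [[] []]] [[[] []] [[] []]].
Qed.

Lemma tbasisE p r : tbasis F p r = (r == p)%:R.
Proof.
rewrite /tbasis /tpure ffunE !qbasisE -natrM mulnb.
by case: r p => [r1 r2] [p1 p2]; rewrite xpair_eqE.
Qed.

Lemma tpureZ k l x y : tpure (k *: x) (l *: y) = (k * l) *: tpure x y :> tens F.
Proof. by apply/ffunP => r; rewrite !ffunE mulrACA. Qed.

Variables a1 b1 a2 b2 : F.
Definition tc (p q : tidx) : F := qcoef a1 b1 p.1 q.1 * qcoef a2 b2 p.2 q.2.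

Lemma tmul_sum z w : tmul a1 b1 a2 b2 z w =
  \sum_p \sum_q (z p * w q * tc p q) *: tbasis F (txor p q).
Proof.
rewrite /tmul; apply: eq_bigr => p _; apply: eq_bigr => q _.
by rewrite !qmul_basis tpureZ scalerA.
Qed.

Lemma tmulE z w r : tmul a1 b1 a2 b2 z w r =
  \sum_p z p * w (txor p r) * tc p (txor p r).
Proof.
rewrite tmul_sum sum_ffunE; apply: eq_bigr => p _.
rewrite sum_ffunE (bigD1 (txor p r)) //= [X in _ + X]big1 ?addr0 => [|q nq].
  by rewrite ffZ tbasisE eq_sym txor_eq eqxx mulr1.
by rewrite ffZ tbasisE eq_sym txor_eq (negPf nq) mulr0.
Qed.

Lemma qcoef_assoc (a b : F) p s r :
  qcoef a b p (qxor p s) * qcoef a b s (qxor s r)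
  = qcoef a b (qxor p s) (qxor s r) * qcoef a b p (qxor p r).
Proof.
by case: p s r => [[] []] [[] []] [[] []]; rewrite /qcoef /=; ring.
Qed.

Lemma tc_assoc p s r :
  tc p (txor p s) * tc s (txor s r) = tc (txor p s) (txor s r) * tc p (txor p r).
Proof. by rewrite /tc /= mulrACA qcoef_assoc qcoef_assoc mulrACA. Qed.

Lemma txor_injl p : injective (txor p).
Proof. by move=> x y /(congr1 (txor p)); rewrite -!txorA txorpp !(txorC t0) !txor0. Qed.

Lemma txor_pp p s r : txor (txor p s) (txor p r) = txor s r.
Proof.
by case: p s r => [[[] []] [[] []]] [[[] []] [[] []]] [[[] []] [[] []]].
Qed.

Lemma txorKl p s : txor p (txor p s) = s.
Proof. by rewrite -txorA txorpp txorC txor0. Qed.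
Lemma txor_perm p s r : txor (txor p s) r = txor s (txor p r).
Proof. by rewrite (txorC p) txorA. Qed.

Lemma rearr (a b c d e f g : F) :
  d * e = f * g -> a * b * d * c * e = a * (b * c * f) * g.
Proof. move=> H; transitivity (a * b * c * (d * e)); [ring | rewrite H; ring]. Qed.

Lemma tmulA x y z : tmul a1 b1 a2 b2 (tmul a1 b1 a2 b2 x y) z
  = tmul a1 b1 a2 b2 x (tmul a1 b1 a2 b2 y z).
Proof.
apply/ffunP => r; rewrite !tmulE.
under eq_bigr do rewrite tmulE !mulr_suml.
rewrite exchange_big /=; apply: eq_bigr => p _.
rewrite tmulE mulr_sumr mulr_suml.
rewrite (reindex_inj (@txor_injl p)) /=.
apply: eq_bigr => s _.
have H := tc_assoc p (txor p s) r.
rewrite txorKl txor_perm in H.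
by rewrite txorKl txor_perm; apply: rearr.
Qed.

Notation mul := (tmul a1 b1 a2 b2).

Lemma ffD (aT : finType) (f g : {ffun aT -> F^o}) x : (f + g) x = f x + g x.
Proof. by rewrite ffunE. Qed.
Lemma ffN (aT : finType) (f : {ffun aT -> F^o}) x : (- f) x = - f x.
Proof. by rewrite ffunE. Qed.
Lemma ff0 (aT : finType) x : (0 : {ffun aT -> F^o}) x = 0.
Proof. by rewrite ffunE. Qed.

Lemma tmulDl x y z : mul (x + y) z = mul x z + mul y z.
Proof.
apply/ffunP => r; rewrite ffD !tmulE -big_split; apply: eq_bigr => p _.
by rewrite ffD !mulrDl.
Qed.
Lemma tmulDr x y z : mul z (x + y) = mul z x + mul z y.
Proof.
apply/ffunP => r; rewrite ffD !tmulE -big_split; apply: eq_bigr => p _.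
by rewrite ffD mulrDr mulrDl.
Qed.
Lemma tmulZl k x z : mul (k *: x) z = k *: mul x z.
Proof.
apply/ffunP => r; rewrite ffZ !tmulE mulr_sumr; apply: eq_bigr => p _.
by rewrite ffZ !mulrA.
Qed.
Lemma tmulZr k x z : mul z (k *: x) = k *: mul z x.
Proof.
apply/ffunP => r; rewrite ffZ !tmulE mulr_sumr; apply: eq_bigr => p _.
rewrite ffZ; ring.
Qed.
Lemma tmulNl x z : mul (- x) z = - mul x z.
Proof. by rewrite -scaleN1r tmulZl scaleN1r. Qed.
Lemma tmulNr x z : mul z (- x) = - mul z x.
Proof. by rewrite -scaleN1r tmulZr scaleN1r. Qed.

Lemma toneE r : tone F r = (r == t0)%:R.
Proof. by rewrite -tbasisE. Qed.

Lemma tc0l r : tc t0 r = 1.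
Proof. by case: r => [[[] []] [[] []]]; rewrite /tc /qcoef /= !mulr1. Qed.
Lemma tc0r r : tc r t0 = 1.
Proof. by case: r => [[[] []] [[] []]]; rewrite /tc /qcoef /= ?mulr1 ?mul1r. Qed.

Lemma tmul1l x : mul (tone F) x = x.
Proof.
apply/ffunP => r; rewrite tmulE (bigD1 t0) //= big1 ?addr0 => [|p np].
  by rewrite toneE eqxx mul1r tc0l mulr1 txorC txor0.
by rewrite toneE (negPf np) !mul0r.
Qed.
Lemma tmul1r x : mul x (tone F) = x.
Proof.
apply/ffunP => r; rewrite tmulE (bigD1 r) //= big1 ?addr0 => [|p np].
  by rewrite toneE txorpp eqxx mulr1 tc0r mulr1.
by rewrite toneE txor_eq txor0 eq_sym (negPf np) mulr0 mul0r.
Qed.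

Lemma tTrdE (z : tens F) : tTrd z = z t0 * 4%:R.
Proof.
rewrite /tTrd (bigD1 t0) //= big1 ?addr0 => [|p np].
  by rewrite /qTrd !qbasisE /= !mulr1 -natrM.
rewrite /qTrd !ffunE.
case: p np => [p1 p2] /=; rewrite /t0 xpair_eqE negb_and => /orP[].
  by rewrite eq_sym => /negPf ->; rewrite mulr0 mul0r mulr0.
by rewrite eq_sym => /negPf ->; rewrite !mulr0.
Qed.

Lemma tTrdD (x y : tens F) : tTrd (x + y) = tTrd x + tTrd y.
Proof. by rewrite !tTrdE ffD mulrDl. Qed.
Lemma tTrdZ k (x : tens F) : tTrd (k *: x) = k * tTrd x.
Proof. by rewrite !tTrdE ffZ mulrA. Qed.
Lemma tTrdN (x : tens F) : tTrd (- x) = - tTrd x.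
Proof. by rewrite !tTrdE ffN mulNr. Qed.

Lemma tTrdC x y : tTrd (mul x y) = tTrd (mul y x).
Proof.
rewrite !tTrdE !tmulE; congr (_ * _); apply: eq_bigr => p _.
by rewrite txor0 (mulrC (x p)).
Qed.

Lemma qgamma_basis p : qgamma (qbasis F p) = qs p *: qbasis F p.
Proof.
apply/ffunP => r; rewrite /qgamma /qTrd /qone /qs !ffunE.
case: p r => [[] []] [[] []]; rewrite /= ?mulr0 ?mulr1 ?mul0r ?subr0 ?sub0r ?scale0r ?ffunE ?mulr1 ?mulr0 /=.
all: rewrite ?scaler0 ?scale1r ?scaleN1r ?sub0r //.
by rewrite -[2 *: 1]/(2 * 1 : F) mulr1 -addrA subrr addr0.
Qed.

Lemma tpure_qb p : tpure (qbasis F p.1) (qbasis F p.2) = tbasis F p.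
Proof. by []. Qed.

Lemma tgammaE (z : tens F) r : tgamma z r = ts r * z r.
Proof.
rewrite /tgamma /tmap sum_ffunE (bigD1 r) //= big1 ?addr0 => [|p np].
  by rewrite !qgamma_basis tpureZ !ffZ tpure_qb tbasisE eqxx mulr1 mulrC.
by rewrite !qgamma_basis tpureZ !ffZ tpure_qb tbasisE eq_sym (negPf np) !mulr0.
Qed.

Lemma qs2 p : qs p * qs p = 1.
Proof. by rewrite /qs; case: ifP => _; rewrite ?mulr1 ?mulrNN ?mulr1. Qed.
Lemma ts2 p : ts p * ts p = 1.
Proof. by rewrite /ts mulrACA !qs2 mulr1. Qed.

Lemma tgammaK (z : tens F) : tgamma (tgamma z) = z.
Proof. by apply/ffunP => r; rewrite !tgammaE mulrA ts2 mul1r. Qed.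
Lemma tgammaD (x y : tens F) : tgamma (x + y) = tgamma x + tgamma y.
Proof. by apply/ffunP => r; rewrite ffD !tgammaE ffD mulrDr. Qed.
Lemma tgammaZ k (x : tens F) : tgamma (k *: x) = k *: tgamma x.
Proof. by apply/ffunP => r; rewrite ffZ !tgammaE ffZ mulrCA. Qed.
Lemma tgammaN (x : tens F) : tgamma (- x) = - tgamma x.
Proof. by apply/ffunP => r; rewrite ffN !tgammaE ffN mulrN. Qed.
Lemma tTrd_gamma (z : tens F) : tTrd (tgamma z) = tTrd z.
Proof. by rewrite !tTrdE tgammaE /ts /qs /= mulr1 mul1r. Qed.
Lemma tgamma1 : tgamma (tone F) = tone F.
Proof.
apply/ffunP => r; rewrite tgammaE toneE.
by case: eqP => [->|_]; rewrite ?mulr0 // /ts /qs /= mulr1 mulr1.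
Qed.

Lemma qcoef_gamma (a b : F) p r :
  qs r * qcoef a b p (qxor p r) = qs (qxor p r) * qs p * qcoef a b (qxor p r) p.
Proof.
by case: p r => [[] []] [[] []]; rewrite /qs /qcoef /=; ring.
Qed.

Lemma tc_gamma p r : ts r * tc p (txor p r) = ts (txor p r) * ts p * tc (txor p r) p.
Proof.
rewrite /ts /tc /= mulrACA qcoef_gamma qcoef_gamma.
set A := qs _; set B := qs _; set C := qs _; set D := qs _.
set E := qcoef _ _ _ _; set G := qcoef _ _ _ _; ring.
Qed.

Lemma tgamma_mul x y : tgamma (mul x y) = mul (tgamma y) (tgamma x).
Proof.
apply/ffunP => r; rewrite tgammaE !tmulE mulr_sumr.
rewrite [RHS](reindex_inj (@txor_inj r)) /=; apply: eq_bigr => p _.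
rewrite !tgammaE txorK.
have H := tc_gamma p r.
set A := ts r in H *; set B := tc p _ in H *; set C := ts (txor p r) in H *.
set D := ts p in H *; set E := tc _ p in H *.
transitivity (x p * y (txor p r) * (A * B)); first by ring.
by rewrite H; ring.
Qed.

Definition Bf (u x y : tens F) : F := tTrd (mul (mul x u) (tgamma y)).

Lemma BfDl u x y z : Bf u (x + y) z = Bf u x z + Bf u y z.
Proof. by rewrite /Bf !tmulDl tTrdD. Qed.
Lemma BfZl u k x z : Bf u (k *: x) z = k * Bf u x z.
Proof. by rewrite /Bf !tmulZl tTrdZ. Qed.
Lemma BfDr u x y z : Bf u z (x + y) = Bf u z x + Bf u z y.
Proof. by rewrite /Bf tgammaD tmulDr tTrdD. Qed.
Lemma BfZr u k x z : Bf u z (k *: x) = k * Bf u z x.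
Proof. by rewrite /Bf tgammaZ tmulZr tTrdZ. Qed.
Lemma Bf0l u z : Bf u 0 z = 0.
Proof. by rewrite -(scale0r 0) BfZl mul0r. Qed.
Lemma Bf0r u z : Bf u z 0 = 0.
Proof. by rewrite -(scale0r 0) BfZr mul0r. Qed.

Lemma Bf_sym u x y : tgamma u = u -> Bf u x y = Bf u y x.
Proof.
move=> hu; rewrite /Bf -[RHS]tTrd_gamma tgamma_mul tgamma_mul tgammaK hu.
by rewrite tmulA.
Qed.

Lemma Bf_suml u (I : finType) (f : I -> tens F) z :
  Bf u (\sum_i f i) z = \sum_i Bf u (f i) z.
Proof.
by apply: (big_morph (fun x => Bf u x z)) => [x y|]; rewrite ?BfDl ?Bf0l.
Qed.
Lemma Bf_sumr u (I : finType) (f : I -> tens F) z :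
  Bf u z (\sum_i f i) = \sum_i Bf u z (f i).
Proof.
by apply: (big_morph (fun x => Bf u z x)) => [x y|]; rewrite ?BfDr ?Bf0r.
Qed.

Lemma iso_from u (wv : 'I_5 -> tens F) :
  (forall i j, Bf u (wv i) (wv j) = 0) ->
  (forall c : 'I_5 -> F, \sum_(i < 5) c i *: wv i = 0 -> forall i, c i = 0) ->
  has_tot_isotropic_subspace (qform a1 b1 a2 b2 u) 5.
Proof.
move=> h0 hind; exists wv; split => // c.
change (Bf u (\sum_(i < 5) c i *: wv i) (\sum_(i < 5) c i *: wv i) = 0).
rewrite Bf_suml big1 // => i _.
by rewrite BfZl Bf_sumr big1 ?mulr0 // => j _; rewrite BfZr h0 mulr0.
Qed.

Lemma supp_mul (sel : tidx -> qidx) (x u : tens F) :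
  (forall s r, sel (txor s r) = qxor (sel s) (sel r)) ->
  (forall r, sel r != (false,false) -> x r = 0) ->
  (forall r, sel r = (false,false) -> u r = 0) ->
  forall r, sel r = (false,false) -> mul x u r = 0.
Proof.
move=> hs hx hu r hr; rewrite tmulE big1 // => s _.
case: (eqVneq (sel s) (false,false)) => h.
  by rewrite hu ?mulr0 ?mul0r // hs h hr.
by rewrite hx // !mul0r.
Qed.

Lemma Bf_supp (sel : tidx -> qidx) (x y u : tens F) :
  (forall s r, sel (txor s r) = qxor (sel s) (sel r)) ->
  (forall r, sel r != (false,false) -> x r = 0) ->
  (forall r, sel r != (false,false) -> y r = 0) ->
  (forall r, sel r = (false,false) -> u r = 0) ->
  Bf u x y = 0.
Proof.
move=> hs hx hy hu; rewrite /Bf tTrdE tmulE big1 ?mul0r // => s _.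
case: (eqVneq (sel s) (false,false)) => h.
  by rewrite (supp_mul hs hx hu) // !mul0r.
by rewrite tgammaE txor0 hy // mulr0 mulr0 mul0r.
Qed.

Lemma tmul_basis p q : mul (tbasis F p) (tbasis F q) = tc p q *: tbasis F (txor p q).
Proof.
apply/ffunP => r; rewrite tmulE ffZ tbasisE (bigD1 p) //= big1 ?addr0 => [|s ns].
  rewrite !tbasisE eqxx mul1r txor_eq.
  by case: eqP => [->|nr]; rewrite ?txorKl ?mulr1 ?mul1r ?mulr0 ?mul0r.
by rewrite tbasisE (negPf ns) !mul0r.
Qed.

Lemma tgamma_tbasis p : tgamma (tbasis F p) = ts p *: tbasis F p.
Proof.
apply/ffunP => r; rewrite tgammaE ffZ !tbasisE.
by case: eqP => [->|]; rewrite ?mulr0.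
Qed.

Definition qi (n : nat) : qidx := nth (false,false) [:: (false,false); (true,false); (false,true); (true,true)] n.

Lemma qi_inj (i j : nat) : (i < 4)%N -> (j < 4)%N -> qi i = qi j -> i = j.
Proof. by case: i => [|[|[|[|?]]]] // _; case: j => [|[|[|[|?]]]]. Qed.

Definition wfam (emb : qidx -> tidx) (w : tens F) (i : 'I_5) : tens F :=
  if (i : nat) == 4%N then w else tbasis F (emb (qi i)).

Lemma wfam_indep (emb : qidx -> tidx) (w : tens F) (r : tidx) :
  injective emb -> (forall p, r != emb p) -> w r != 0 ->
  forall c : 'I_5 -> F, \sum_(i < 5) c i *: wfam emb w i = 0 -> forall i, c i = 0.
Proof.
move=> hinj hr hw c hs.
have c4 : c ord_max = 0.
  have := congr1 (fun f : tens F => f r) hs; rewrite /= sum_ffunE ff0 (bigD1 ord_max) //=.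
  rewrite big1 ?addr0 => [|j nj].
    by rewrite ffZ /wfam /= => /eqP; rewrite mulf_eq0 (negPf hw) orbF => /eqP.
  rewrite ffZ /wfam ifF ?tbasisE ?(negPf (hr _)) ?mulr0 //.
  apply/negP => /eqP hj; case/negP: nj; apply/eqP/val_inj; exact: hj.
move=> i; case: (eqVneq i ord_max) => [->//|ni].
have hi : ((i : nat) < 4)%N.
  by have := ltn_ord i; rewrite ltnS leq_eqVlt => /orP[/eqP hi|//]; case/negP: ni; apply/eqP/val_inj.
have := congr1 (fun f : tens F => f (emb (qi i))) hs; rewrite /= sum_ffunE ff0 (bigD1 i) //=.
rewrite big1 ?addr0 => [|j nj].
  by rewrite ffZ /wfam ifF ?tbasisE ?eqxx ?mulr1 // ltn_eqF.
case: (eqVneq j ord_max) => [->|nj4]; first by rewrite ffZ c4 mul0r.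
have hj : ((j : nat) < 4)%N.
  by have := ltn_ord j; rewrite ltnS leq_eqVlt => /orP[/eqP hj|//]; case/negP: nj4; apply/eqP/val_inj.
rewrite ffZ /wfam ifF ?ltn_eqF // tbasisE.
case: eqP => [/hinj /qi_inj h|]; last by rewrite mulr0.
by case/negP: nj; apply/eqP/val_inj; rewrite /= (h hi hj).
Qed.

End Alg.

Lemma u_zero (F : fieldType) (u : tens F) : (2%:R : F) != 0 ->
  tgamma u = u -> tTrd u = 0 ->
  forall r : tidx, (r.1 == (false,false)) || (r.2 == (false,false)) -> u r = 0.
Proof.
move=> h2 hs ht r hr.
case: (eqVneq r (t0)) => [->|nr].
  move: ht; rewrite tTrdE => /eqP; rewrite mulf_eq0 => /orP[/eqP//|].
  by rewrite -[4%N]/(2 * 2)%N natrM mulf_eq0 orbb (negPf h2).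
have hts : ts F r = -1.
  move: hr nr; case: r => [[[] []] [[] []]] //= _ _; rewrite /ts /qs /=;
  by rewrite ?mulr1 ?mul1r.
have := congr1 (fun f : tens F => f r) hs; rewrite /= tgammaE hts mulN1r.
move/eqP; rewrite -subr_eq0 -opprD oppr_eq0 -mulr2n -mulr_natr mulf_eq0 (negPf h2) orbF.
by move/eqP.
Qed.


Unset Implicit Arguments.
Set Strict Implicit.

Theorem lemma4p3 (F : fieldType) (char_not2 : (2%:R : F) != 0)
  (a1 b1 a2 b2 a3 b3 a4 b4 : F)
  (ha1 : a1 != 0) (hb1 : b1 != 0) (ha2 : a2 != 0) (hb2 : b2 != 0)
  (ha3 : a3 != 0) (hb3 : b3 != 0) (ha4 : a4 != 0) (hb4 : b4 != 0)
  (u v : tens F)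
  (huv : tmul a1 b1 a2 b2 u v = tone F) (hvu : tmul a1 b1 a2 b2 v u = tone F)
  (hu_sym : tgamma u = u) (hu_trd : tTrd u = 0)
  (phi : tens F -> tens F)
  (phi_lin : forall (k : F) (x y : tens F), phi (k *: x + y) = k *: phi x + phi y)
  (phi_bij : bijective phi)
  (phi_one : phi (tone F) = tone F)
  (phi_mul : forall x y : tens F,
      phi (tmul a3 b3 a4 b4 x y) = tmul a1 b1 a2 b2 (phi x) (phi y))
  (phi_inv : forall x : tens F,
      phi (tgamma x) = tmul a1 b1 a2 b2 (tmul a1 b1 a2 b2 v (tgamma (phi x))) u) :
  has_tot_isotropic_subspace (qform a1 b1 a2 b2 u) 5.
Proof.
have uz := u_zero char_not2 hu_sym hu_trd.
have phi0 : phi 0 = 0.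
  have h := phi_lin 1 0 0; rewrite !scale1r addr0 in h.
  by apply: (addrI (phi 0)); rewrite addr0 -h.
have phiZ k x : phi (k *: x) = k *: phi x.
  by rewrite -[k *: x]addr0 phi_lin phi0 addr0.
have phi_inj : injective phi := bij_inj phi_bij.
pose X1 := tbasis F ((true,false),(true,false)).
pose X2 := tbasis F ((true,false),(false,true)).
pose l1 := tTrd (tmul a1 b1 a2 b2 u (phi X1)).
pose l2 := tTrd (tmul a1 b1 a2 b2 u (phi X2)).
pose al := if l1 == 0 then 1 else l2.
pose be := if l1 == 0 then 0 else - l1.
pose X := al *: X1 + be *: X2.
pose A := phi X.
have hl : tTrd (tmul a1 b1 a2 b2 u A) = 0.
  rewrite /A /X phi_lin phiZ tmulDr !tmulZr tTrdD !tTrdZ -/l1 -/l2 /al /be.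
  by case: eqP => [->|_]; rewrite ?mulr0 ?mul0r ?addr0 // mulrC mulNr addrN.
have hX : tgamma X = X.
  by rewrite /X tgammaD !tgammaZ !tgamma_tbasis /ts /qs /= mulrNN !mulr1 !scale1r.
pose lam := al * al * (a3 * a4) + be * be * (a3 * b4).
have hXX : tmul a3 b3 a4 b4 X X = lam *: tone F.
  rewrite /X !tmulDl !tmulDr !tmulZl !tmulZr !tmul_basis /tc /qcoef /=.
  apply/ffunP => r; rewrite !ffD !ffZ !tbasisE.
  set e1 := (r == txor (true, false, (true, false)) (true, false, (true, false)))%:R.
  set e2 := (r == txor (true, false, (true, false)) (true, false, (false, true)))%:R.
  rewrite /lam; ring.
have hA2 : tmul a1 b1 a2 b2 A A = lam *: tone F by rewrite -phi_mul hXX phiZ phi_one.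
have hgv : tgamma v = v.
  have h := congr1 (@tgamma F) huv; rewrite tgamma_mul tgamma1 hu_sym in h.
  by rewrite -[tgamma v](tmul1r a1 b1 a2 b2) -huv -tmulA h tmul1l.
have hgA : tgamma A = tmul a1 b1 a2 b2 (tmul a1 b1 a2 b2 u A) v.
  have h := phi_inv X; rewrite hX -/A in h.
  by rewrite [in RHS]h !tmulA huv tmul1r -tmulA huv tmul1l.
pose w := tmul a1 b1 a2 b2 (tmul a1 b1 a2 b2 u A) v.
have hgw : tgamma w = A.
  by rewrite /w !tgamma_mul hgv hgA hu_sym !tmulA hvu tmul1r -tmulA hvu tmul1l.
have hwu : tmul a1 b1 a2 b2 w u = tmul a1 b1 a2 b2 u A.
  by rewrite /w !tmulA hvu tmul1r.
have hww : Bf a1 b1 a2 b2 u w w = 0.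
  by rewrite /Bf hgw hwu tmulA hA2 tmulZr tmul1r tTrdZ hu_trd mulr0.
have h1w : Bf a1 b1 a2 b2 u (tone F) w = 0.
  by rewrite /Bf hgw tmul1l.
have hyw y : tgamma y = - y -> Bf a1 b1 a2 b2 u y w = 0.
  move=> hy; rewrite /Bf hgw.
  set T := tTrd _.
  have hT : T = - T.
    rewrite /T -{1}tTrd_gamma tgamma_mul tgamma_mul hy hu_sym hgA tmulNr tmulNr tTrdN.
    rewrite !tmulA -(tmulA a1 b1 a2 b2 v u y) hvu tmul1l.
    by rewrite -(tmulA a1 b1 a2 b2 u A y) tTrdC.
  apply/eqP; move/eqP: hT; rewrite -subr_eq0 opprK -mulr2n -mulr_natr mulf_eq0.
  by rewrite (negPf char_not2) orbF.
have key : forall (sel : tidx -> qidx) (emb : qidx -> tidx),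
    (forall s r, sel (txor s r) = qxor (sel s) (sel r)) -> injective emb ->
    (forall p, sel (emb p) = (false,false)) -> emb (false,false) = t0 ->
    (forall p, p != (false,false) -> ts F (emb p) = -1) ->
    (forall r, sel r = (false,false) -> u r = 0) ->
    forall r, sel r != (false,false) -> w r != 0 ->
    has_tot_isotropic_subspace (qform a1 b1 a2 b2 u) 5.
  move=> sel emb hs hinj hse he0 hts huz r hr hwr.
  have hre p : r != emb p.
    by apply/eqP => hre; move: hr; rewrite hre hse eqxx.
  have hb p q : Bf a1 b1 a2 b2 u (tbasis F (emb p)) (tbasis F (emb q)) = 0.
    apply: (@Bf_supp _ a1 b1 a2 b2 sel _ _ _ hs) => // r2 hr2; rewrite tbasisE; case: eqP => // he;
    by move: hr2; rewrite he hse eqxx.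
  have hbw p : Bf a1 b1 a2 b2 u (tbasis F (emb p)) w = 0.
    case: (eqVneq p (false,false)) => [->|np]; first by rewrite he0 -h1w.
    by apply: hyw; rewrite tgamma_tbasis hts // scaleN1r.
  apply: (@iso_from F a1 b1 a2 b2 u (wfam emb w)); last exact: wfam_indep hinj hre hwr.
  move=> i j; rewrite /wfam.
  case: ifP => _; case: ifP => _ //.
  - by rewrite Bf_sym.
have [r /andP[hr0 hwr]] : exists r, (r != t0) && (w r != 0).
  case: (boolP [exists r, (r != t0) && (w r != 0)]) => [/existsP //|/existsPn hn].
  have hwsc : w = w t0 *: tone F.
    apply/ffunP => r; rewrite ffZ toneE; case: (eqVneq r t0) => [->|nr].
      by rewrite mulr1.
    by have := hn r; rewrite nr /= negbK => /eqP ->; rewrite mulr0.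
  have hA : A = w t0 *: tone F.
    have <- : tmul a1 b1 a2 b2 (tmul a1 b1 a2 b2 v w) u = A.
      by rewrite /w !tmulA hvu tmul1r -tmulA hvu tmul1l.
    by rewrite {1}hwsc tmulZr tmul1r tmulZl hvu.
  have hXc : X = w t0 *: tone F by apply: phi_inj; rewrite -/A hA phiZ phi_one.
  have c1 := congr1 (fun f : tens F => f (true,false,(true,false))) hXc.
  have c2 := congr1 (fun f : tens F => f (true,false,(false,true))) hXc.
  move: c1 c2; rewrite /X /= !ffD !ffZ !tbasisE !toneE /= !mulr1 !mulr0 addr0 add0r.
  rewrite /al /be; case: eqP => hl1.
    by move=> /eqP; rewrite oner_eq0.
  by move=> _ /eqP; rewrite oppr_eq0 => /eqP.
case: (eqVneq r.2 (false,false)) => h2.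
  apply: (key fst (fun p => (false,false,p)) _ _ _ _ _ _ r) => //.
  - by move=> p q [].
  - by move=> p np; rewrite /ts /qs /= (negPf np) mul1r.
  - by move=> r' h; apply: uz; rewrite h.
  - by apply/eqP => h1; move/negP: hr0; apply; apply/eqP; rewrite [r]surjective_pairing h1 h2.
apply: (key snd (fun p => (p,(false,false))) _ _ _ _ _ _ r) => //.
- by move=> p q [].
- by move=> p np; rewrite /ts /qs /= (negPf np) mulr1.
- by move=> r' h; apply: uz; rewrite h orbT.
Qed.
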